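(* Let $H(a,b,c)=C(a,b+c)-C(b,a+c)$. Then for all non-negative integers $a,b,c$, \[\frac{1}{4^c}H(a,b,c)=\sum_{j=1}^c\frac{1}{4^j}H(b+1,a+1,j-2).\]
   Context: $C(p,q)=\frac{(2p)!(2q)!}{p!(p+q)!q!}$ for non-negative integers $p,q$. Note $H(b+1,a+1,j-2)=C(b+1,a+j-1)-C(a+1,b+j-1)$, whose arguments are non-negative for $j\ge1$. *)

(* Defs.v *)
From mathcomp Require Import all_boot all_order all_algebra.
Set Implicit Arguments. Unset Strict Implicit. Unset Printing Implicit Defensive.
Import Order.TTheory GRing.Theory Num.Theory.
Local Open Scope ring_scope.

Definition C (p q : nat) : rat :=
  ((p.*2)`! * (q.*2)`!)%:R / (p`! * (p + q)`! * q`!)%:R.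

Definition H (a b c : nat) : rat := C a (b + c) - C b (a + c).

(* H(b+1,a+1,j-2) for j >= 1, where j-2 may be -1:
   = C(b+1, a+1+(j-2)) - C(a+1, b+1+(j-2)) = C(b+1,a+j-1) - C(a+1,b+j-1). *)
Definition Hshift (a b j : nat) : rat :=
  C b.+1 (a + j - 1) - C a.+1 (b + j - 1).

(* Main.v *)
Require Import Defs.
From mathcomp Require Import all_boot all_order all_algebra.
From mathcomp Require Import ring lra.
Import GRing.Theory Num.Theory.
Local Open Scope ring_scope.

Lemma C_rec p q : C p q.+1 + C p.+1 q = 4%:R * C p q.
Proof.
rewrite /C !doubleS addnS addSn !factS !natrM.
have E1 n : ((n.*2).+2)%:R = (2%:R * n%:R + 2%:R : rat) by rewrite -addn2 natrD -mul2n natrM.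
have E2 n : ((n.*2).+1)%:R = (2%:R * n%:R + 1 : rat) by rewrite -addn1 natrD -mul2n natrM.
have E3 n : (n.+1)%:R = (n%:R + 1 : rat) by rewrite -addn1 natrD.
rewrite !E1 !E2 !E3 natrD.
have h1 : ((p.*2)`!)%:R != 0 :> rat by rewrite pnatr_eq0 -lt0n fact_gt0.
have h2 : ((q.*2)`!)%:R != 0 :> rat by rewrite pnatr_eq0 -lt0n fact_gt0.
have h3 : (p`!)%:R != 0 :> rat by rewrite pnatr_eq0 -lt0n fact_gt0.
have h4 : (q`!)%:R != 0 :> rat by rewrite pnatr_eq0 -lt0n fact_gt0.
have h5 : ((p+q)`!)%:R != 0 :> rat by rewrite pnatr_eq0 -lt0n fact_gt0.
have h6 : (p%:R + q%:R + 1) != 0 :> rat by rewrite -natrD -E3 pnatr_eq0.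
have h7 : (p%:R + 1) != 0 :> rat by rewrite -E3 pnatr_eq0.
have h8 : (q%:R + 1) != 0 :> rat by rewrite -E3 pnatr_eq0.
move: h1 h2 h3 h4 h5 h6 h7 h8.
move: ((p.*2)`!)%:R ((q.*2)`!)%:R (p`!)%:R (q`!)%:R ((p+q)`!)%:R (p%:R : rat) (q%:R : rat).
move=> A B P Q S x y h1 h2 h3 h4 h5 h6 h7 h8.
field. by rewrite ?h1 ?h2 ?h3 ?h4 ?h5 ?h6 ?h7 ?h8.
Qed.

Lemma CC p q : C p q = C q p.
Proof. by rewrite /C addnC [(p`! * _)%N]mulnC [(_ * q`!)%N]mulnC mulnA [((_.*2)`! * _)%N]mulnC. Qed.

Theorem corollary8p10 (a b c : nat) :
  H a b c / 4%:R ^+ c = \sum_(1 <= j < c.+1) Hshift a b j / 4%:R ^+ j.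
Proof.
elim: c => [|c IH].
  by rewrite big_geq // /H !addn0 CC subrr mul0r.
rewrite (big_nat_recr c.+1) //= -IH /Hshift !addnS !subn1 /= /H !addnS.
have hC : forall p q, C p q.+1 = 4%:R * C p q - C p.+1 q.
  by move=> p q; rewrite -C_rec addrK.
rewrite !hC.
have h4 : (4%:R : rat) != 0 by [].
rewrite exprS; field. by rewrite expf_neq0.
Qed.
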